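(* Let $k$ be a positive integer and let $\Pi_0,\Pi_1,\Pi\in\mathrm{Part}_2(2k)$, with $\Pi_0$ and $\Pi_1$ perfect matchings, and assume $\#(\Pi_0\vee\Pi_1\vee\Pi)=1$. Then $$\#(\Pi_0\vee\Pi)+\#(\Pi_1\vee\Pi)\le 1+\#\Pi\le k+1,$$ and moreover, writing $r=\#(\Pi_0\vee\Pi_1)$, if $r>1$ then $$\#(\Pi_0\vee\Pi)+\#(\Pi_1\vee\Pi)\le k+1-\lfloor r/2\rfloor.$$
   Context: $\mathrm{Part}(k)$ is the set of set partitions of $\{1,\dots,k\}$ (families of nonempty pairwise disjoint subsets, called parts, whose union is $\{1,\dots,k\}$). $\Sigma$ refines $\Pi$ if every part of $\Sigma$ is contained in a part of $\Pi$. $\Pi\vee\Sigma$ is the finest partition refined by both $\Pi$ and $\Sigma$. A perfect matching is a partition all of whose parts have cardinality 2. $\mathrm{Part}_2(k)$ is the set of partitions all of whose parts have cardinality at least 2. $\#S$ is the cardinality of $S$ and $\lfloor x\rfloor$ the integer part. *)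

(* Defs.v *)
From mathcomp Require Import all_boot.
Set Implicit Arguments. Unset Strict Implicit. Unset Printing Implicit Defensive.

(* A set partition of the finite type T (ground set {1..k} is modelled by 'I_k):
   a family of nonempty pairwise disjoint subsets covering T (finset's [partition]). *)
Definition is_part (T : finType) (P : {set {set T}}) : Prop :=
  partition P [set: T].

Definition refines (T : finType) (S P : {set {set T}}) : Prop :=
  forall B, B \in S -> exists2 C, C \in P & B \subset C.

Definition is_join (T : finType) (P Q J : {set {set T}}) : Prop :=
  [/\ is_part J, refines P J, refines Q J &
      forall R, is_part R -> refines P R -> refines Q R -> refines J R].

Definition is_part2 (T : finType) (P : {set {set T}}) : Prop :=
  is_part P /\ forall B, B \in P -> 2 <= #|B|.

Definition perfect_matching (T : finType) (P : {set {set T}}) : Prop :=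
  is_part P /\ forall B, B \in P -> #|B| = 2.

(* Main.v *)
Require Import Defs.
From mathcomp Require Import all_boot.
From mathcomp Require Import zify.
Set Implicit Arguments. Unset Strict Implicit. Unset Printing Implicit Defensive.

Section Graphs.
Variable T : finType.
Implicit Types (s : seq (T * T)) (x y z u v : T).

Definition erel s : rel T := fun x y => ((x, y) \in s) || ((y, x) \in s).
Definition cs s : rel T := connect (erel s).
Definition cls s x : {set T} := [set y in [set: T] | cs s x y].
Definition cpart s := [set cls s x | x in [set: T]].
Definition ncomp s := #|cpart s|.
Lemma cpartE s : equivalence_partition (cs s) [set: T] = cpart s.
Proof. by []. Qed.
Definition iso s := #|[set x | cls s x == [set x]]|.

Lemma erel_sym s : symmetric (erel s).
Proof. by move=> x y; rewrite /erel orbC. Qed.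

Lemma cs_sym s x y : cs s x y = cs s y x.
Proof. exact: (sym_connect_sym (@erel_sym s)). Qed.

Lemma cs_refl s x : cs s x x.
Proof. exact: connect0. Qed.

Lemma cs_trans s x y z : cs s x y -> cs s y z -> cs s x z.
Proof. exact: connect_trans. Qed.

Lemma cs_edge s u v : (u, v) \in s -> cs s u v.
Proof. by move=> h; apply: connect1; rewrite /erel h. Qed.

Lemma cs_edge' s u v : (u, v) \in s -> cs s v u.
Proof. by move=> h; rewrite cs_sym cs_edge. Qed.

Lemma cs_min s (R : rel T) : reflexive R -> transitive R ->
  (forall u v, (u, v) \in s -> R u v /\ R v u) -> forall x y, cs s x y -> R x y.
Proof.
move=> Rr Rt He x y /connectP [p pp ->] {y}.
elim: p x pp => [|z p IH] x /=; first by move=> _; apply: Rr.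
case/andP => exz /IH; apply: Rt.
by case/orP: exz => /He [].
Qed.

Lemma cs_sub s s' : (forall u v, (u, v) \in s -> cs s' u v) ->
  forall x y, cs s x y -> cs s' x y.
Proof.
move=> H; apply: cs_min; [exact: cs_refl | move=> a b c; apply: cs_trans|].
by move=> u v uv; split; [|rewrite cs_sym]; apply: H.
Qed.

Lemma cs_subl s s' : {subset s <= s'} -> forall x y, cs s x y -> cs s' x y.
Proof. by move=> H; apply: cs_sub => u v /H; apply: cs_edge. Qed.

Lemma cs_catl s s' x y : cs s x y -> cs (s ++ s') x y.
Proof. by apply: cs_subl => e; rewrite mem_cat => ->. Qed.

Lemma cs_catr s s' x y : cs s' x y -> cs (s ++ s') x y.
Proof. by apply: cs_subl => e; rewrite mem_cat orbC => ->. Qed.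

Lemma cls_equiv s : {in [set: T] & &, equivalence_rel (cs s)}.
Proof.
move=> x y z _ _ _; split; first exact: cs_refl.
move=> hxy; apply/idP/idP => h.
  by apply: cs_trans h; rewrite cs_sym.
by apply: cs_trans h.
Qed.

Lemma cls_ext s s' : cs s =2 cs s' -> cls s =1 cls s'.
Proof. by move=> H x; apply/setP => y; rewrite !inE H. Qed.

Lemma ncomp_eq s s' : cs s =2 cs s' -> ncomp s = ncomp s'.
Proof. by move=> H; rewrite /ncomp /cpart (eq_imset _ (cls_ext H)). Qed.

Lemma iso_eq s s' : cs s =2 cs s' -> iso s = iso s'.
Proof.
by move=> H; rewrite /iso; apply: eq_card => x; rewrite !inE (cls_ext H).
Qed.

Lemma cs_same s s' : (forall u v, (u, v) \in s -> cs s' u v) ->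
  (forall u v, (u, v) \in s' -> cs s u v) -> cs s =2 cs s'.
Proof.
move=> H1 H2 x y; apply/idP/idP; [exact: cs_sub | exact: cs_sub].
Qed.


Lemma cls_mem s x y : (y \in cls s x) = cs s x y.
Proof. by rewrite !inE. Qed.

Lemma cls_eq s x y : cs s x y -> cls s x = cls s y.
Proof.
move=> h; apply/setP => z; rewrite !cls_mem; apply/idP/idP => h2.
  by apply: cs_trans h2; rewrite cs_sym.
by apply: cs_trans h2.
Qed.

Lemma cls_eqE s x y : (cls s x == cls s y) = cs s x y.
Proof.
apply/eqP/idP => [h|/cls_eq //]; by rewrite -cls_mem h cls_mem cs_refl.
Qed.

Lemma cls_self s x : x \in cls s x.
Proof. by rewrite cls_mem cs_refl. Qed.

Lemma cpartP s C : reflect (exists x, C = cls s x) (C \in cpart s).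
Proof.
apply: (iffP imsetP) => [[x _ ->]|[x ->]]; first by exists x.
by exists x; rewrite ?inE.
Qed.

Lemma cls_in s x : cls s x \in cpart s.
Proof. by apply/cpartP; exists x. Qed.

Lemma cs_cons s u v x y :
  cs ((u, v) :: s) x y = [|| cs s x y, cs s x u && cs s v y | cs s x v && cs s u y].
Proof.
have Hs := @cs_sym s; have Ht := @cs_trans s.
apply/idP/idP.
- move: x y; apply: cs_min.
  + by move=> x; rewrite cs_refl.
  + move=> y x z /or3P [h|/andP [h1 h2]|/andP[h1 h2]] /or3P [h'|/andP [h1' h2']|/andP[h1' h2']].
    * by rewrite (Ht _ _ _ h h').
    * by rewrite (Ht _ _ _ h h1') h2' orbT.
    * by rewrite (Ht _ _ _ h h1') h2' !orbT.
    * by rewrite h1 (Ht _ _ _ h2 h') orbT.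
    * by rewrite h1 h2' orbT.
    * by rewrite (Ht _ _ _ h1 h2').
    * by rewrite h1 (Ht _ _ _ h2 h') !orbT.
    * by rewrite (Ht _ _ _ h1 h2').
    * by rewrite h1 h2' !orbT.
  + move=> a b; rewrite inE => /orP [/eqP [-> ->]|h].
      by rewrite !cs_refl !orbT.
    by rewrite (cs_edge h) (cs_edge' h).
- have sub : forall a b, cs s a b -> cs ((u, v) :: s) a b.
    by apply: cs_subl => e; rewrite inE => ->; rewrite orbT.
  have uv : cs ((u, v) :: s) u v by apply: cs_edge; rewrite inE eqxx.
  case/or3P => [/sub //|/andP [h1 h2]|/andP [h1 h2]].
    by apply: cs_trans (sub _ _ h1) (cs_trans uv (sub _ _ h2)).
  apply: cs_trans (sub _ _ h1) _; apply: cs_trans (sub _ _ h2).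
  by rewrite cs_sym.
Qed.

Lemma cls_cons s u v x : ~~ cs s u v ->
  cls ((u, v) :: s) x = if cs s x u || cs s x v then cls s u :|: cls s v else cls s x.
Proof.
move=> huv; apply/setP => y; rewrite cls_mem cs_cons.
case: (boolP (cs s x u)) => hxu /=.
  have hxv : cs s x v = false.
    by apply: contraNF huv => h; apply: cs_trans h; rewrite cs_sym.
  rewrite hxv ?andbF ?orbF inE !cls_mem.
  have -> : cs s x y = cs s u y.
    by apply/idP/idP => h; apply: cs_trans h; rewrite // cs_sym.
  by [].
case: (boolP (cs s x v)) => hxv /=; last by rewrite orbF cls_mem.
rewrite inE !cls_mem.
have -> : cs s x y = cs s v y.
  by apply/idP/idP => h; apply: cs_trans h; rewrite // cs_sym.
by rewrite orbC.
Qed.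

Lemma ncomp_cons s u v : ncomp ((u, v) :: s) + ~~ cs s u v = ncomp s.
Proof.
case: (boolP (cs s u v)) => huv /=.
  rewrite addn0; apply: ncomp_eq => x y; rewrite cs_cons.
  apply/idP/idP => [/or3P [//|/andP[h1 h2]|/andP[h1 h2]]|->//].
    by apply: cs_trans h1 (cs_trans huv h2).
  by apply: cs_trans h1 _; apply: cs_trans h2; rewrite cs_sym.
pose M := cls s u :|: cls s v.
pose f (C : {set T}) := if (u \in C) || (v \in C) then M else C.
have Hf : cpart ((u, v) :: s) = f @: cpart s.
  apply/setP => C; apply/cpartP/imsetP => [[x ->]|[D /cpartP [x ->] ->]].
    by exists (cls s x); [exact: cls_in| rewrite cls_cons // /f !cls_mem !(cs_sym s x)].
  by exists x; rewrite cls_cons // /f !cls_mem !(cs_sym s x).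
have uA : cls s u \in cpart s by exact: cls_in.
have vA' : cls s v \in cpart s :\ cls s u.
  by rewrite !inE cls_in andbT cls_eqE cs_sym.
have fu : f (cls s u) = f (cls s v) by rewrite /f !cls_self !orbT.
have finj : {in cpart s :\ cls s u &, injective f}.
  have key : forall C, C \in cpart s :\ cls s u ->
      (u \in C) = false /\ ((v \in C) -> C = cls s v).
    move=> C; rewrite !inE => /andP [hC /cpartP [x Cx]]; subst C; split.
      by apply: contraNF hC; rewrite cls_mem => h; rewrite cls_eqE.
    by rewrite cls_mem => /cls_eq.
  move=> C D hC hD; have [Cu Cv] := key _ hC; have [Du Dv] := key _ hD.
  rewrite /f Cu Du /=.
  case: (boolP (v \in C)) => hvC; case: (boolP (v \in D)) => hvD.
  - by rewrite (Cv hvC) (Dv hvD).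
  - by move=> h; move: Du; rewrite -h /M inE cls_self.
  - by move=> h; move: Cu; rewrite h /M inE cls_self.
  - by [].
rewrite /ncomp Hf -{1}(setD1K uA) imsetU1 fu.
rewrite (setUidPr _) ?addn1; last by rewrite sub1set; apply: imset_f.
by rewrite card_in_imset // [in RHS](cardsD1 (cls s u)) uA add1n.
Qed.


Lemma even_closed (cl : T -> {set T}) (S : {set T}) :
  (forall x, x \in cl x) -> (forall x y, y \in cl x -> cl y = cl x) ->
  (forall x, x \in S -> cl x \subset S) -> (forall x, x \in S -> ~~ odd #|cl x|) ->
  ~~ odd #|S|.
Proof.
move=> clx cly.
move: {2}#|S| (leqnn #|S|) => n; elim: n S => [|n IH] S hn hS hev.
  by move: hn; rewrite leqn0 => /eqP ->.
case: (set_0Vmem S) => [->|[x xS]]; first by rewrite cards0.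
have sub : cl x \subset S by apply: hS.
have disj : forall y, y \in S :\: cl x -> [disjoint cl y & cl x].
  move=> y; rewrite inE => /andP [ynx _]; apply/pred0P => z /=.
  apply/negbTE/negP => /andP [zy zx].
  by move: ynx; rewrite -(cly _ _ zx) (cly _ _ zy) clx.
rewrite -(cardsID (cl x) S) (setIidPr sub) oddD (negbTE (hev _ xS)) /=.
apply: IH.
- rewrite -ltnS; apply: leq_trans hn.
  rewrite -(cardsID (cl x) S) (setIidPr sub) -add1n leq_add2r.
  by apply/card_gt0P; exists x.
- move=> y hy; apply/subsetP => z zy; rewrite inE.
  have := disj _ hy; rewrite disjoint_sym => /disjoint_setI0 H.
  have : z \notin cl x.
    apply/negP => zx; move/setP: H => /(_ z); by rewrite !inE zx zy.
  move=> -> /=; move: hy; rewrite inE => /andP [_ yS].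
  by move/subsetP: (hS _ yS); apply.
- by move=> y; rewrite inE => /andP [_ /hev].
Qed.

Lemma even_inv (p : T -> T) (S : {set T}) : involutive p ->
  (forall z, z \in S -> p z != z) -> (forall z, z \in S -> p z \in S) ->
  ~~ odd #|S|.
Proof.
move=> pK pfp pS.
apply: (@even_closed (fun z => if z \in S then [set z; p z] else [set z])).
- by move=> z; case: ifP; rewrite !inE eqxx.
- move=> z w; case: (boolP (z \in S)) => zS; rewrite !inE.
    case/orP => /eqP ->; first by rewrite zS.
    by rewrite (pS _ zS) pK setUC.
  by move=> /eqP ->; rewrite (negbTE zS).
- by move=> z zS; rewrite zS; apply/subsetP => w; rewrite !inE => /orP [/eqP ->|/eqP ->] //; apply: pS.
- by move=> z zS; rewrite zS cards2 eq_sym pfp.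
Qed.

Lemma even_cls s (S : {set T}) : (forall x, x \in S -> cls s x \subset S) ->
  (forall x, x \in S -> ~~ odd #|cls s x|) -> ~~ odd #|S|.
Proof.
apply: even_closed; first exact: cls_self.
by move=> x y; rewrite cls_mem => /cls_eq ->.
Qed.

Lemma odd_punct (p : T -> T) (C : {set T}) c : involutive p -> (forall z, p z != z) ->
  c \in C -> (forall z, z \in C -> z != c -> p z \in C /\ p z != c) -> odd #|C|.
Proof.
move=> pK pfp cC H; rewrite (cardsD1 c) cC oddD /=.
apply: (@even_inv p); first by [].
  by move=> z _; apply: pfp.
move=> z; rewrite !inE => /andP [zc zC]; have [h1 h2] := H _ zC zc.
by rewrite h1 h2.
Qed.

Lemma cs_closed s (S : {set T}) : (forall a b, (a, b) \in s -> (a \in S) = (b \in S)) ->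
  forall x y, cs s x y -> (x \in S) = (y \in S).
Proof.
move=> H x y hxy; apply/eqP; apply: (@cs_min s (fun a b => (a \in S) == (b \in S)) _ _ _ x y hxy).
- by move=> a; rewrite eqxx.
- by move=> a b c /eqP -> /eqP ->.
- by move=> a b /H ->; rewrite eqxx.
Qed.

Lemma ncomp_le s : (forall x, 2 <= #|cls s x|) -> 2 * ncomp s <= #|T|.
Proof.
move=> H; have P := equivalence_partitionP (@cls_equiv s).
rewrite cpartE in P; rewrite -cardsT (card_partition P) /ncomp.
rewrite mulnC -sum_nat_const; apply: leq_sum => C /cpartP [x ->]; apply: H.
Qed.


Lemma L4 s x a y b : ncomp ((x, a) :: (y, b) :: s) <= ncomp ((x, y) :: (a, b) :: s) + 1.
Proof.
have o1 := ncomp_cons ((y, b) :: s) x a; have o2 := ncomp_cons s y b.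
have n1 := ncomp_cons ((a, b) :: s) x y; have n2 := ncomp_cons s a b.
have Ht := @cs_trans s; have Hs := @cs_sym s.
move: o1 n1; rewrite !cs_cons (Hs b a) (Hs b y) (Hs a y) => o1 n1.
case: (boolP (cs s y b)) o2 => yb o2 /=; last by lia.
case: (boolP (cs s a b)) n2 => ab n2 /=; first by lia.
case: (boolP (cs s x a)) o1 n1 => xa /= o1 n1.
  by move: n1; rewrite yb /= orbT /=; lia.
case: (boolP (cs s x y)) o1 n1 => xy /= o1 n1.
  by lia.
case: (boolP (cs s x b)) o1 n1 => xb /= o1 n1; last by lia.
case: (boolP (cs s y a)) o1 n1 => ya /= o1 n1; last by lia.
by move: ab; rewrite (Ht a y b) // Hs.
Qed.

Definition Ep (p : T -> T) : seq (T * T) := [seq (z, p z) | z <- enum T].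

Lemma Ep_mem p u v : ((u, v) \in Ep p) = (v == p u).
Proof.
apply/mapP/eqP => [[z _ [-> ->]] //|->]; by exists u; rewrite ?mem_enum.
Qed.


Definition swapf (p0 p1 : T -> T) x : T -> T := fun z =>
  if z == x then p0 x else if z == p0 x then x
  else if z == p1 x then p1 (p0 x) else if z == p1 (p0 x) then p1 x else p1 z.

Section Swap.
Variables (p0 p1 : T -> T) (F : seq (T * T)) (x : T).
Hypotheses (p0K : involutive p0) (p1K : involutive p1)
  (p0f : forall z, p0 z != z) (p1f : forall z, p1 z != z)
  (Fev : forall z, ~~ odd #|cls F z|) (hx : p1 x != p0 x).

Let y := p0 x.
Let a := p1 x.
Let b := p1 y.
Let p1' := swapf p0 p1 x.

Let xy : x != y. Proof. by rewrite eq_sym p0f. Qed.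
Let xa : x != a. Proof. by rewrite eq_sym p1f. Qed.
Let yb : y != b. Proof. by rewrite eq_sym p1f. Qed.
Let ay : a != y. Proof. exact: hx. Qed.
Let bx : b != x.
Proof. apply/eqP => h; move: ay; rewrite /a -h /b p1K eqxx. by []. Qed.
Let ab : a != b.
Proof. by apply/eqP => /(inv_inj p1K) /eqP; rewrite (negbTE xy). Qed.
Let p0y : p0 y = x. Proof. exact: p0K. Qed.
Let p1a : p1 a = x. Proof. exact: p1K. Qed.
Let p1b : p1 b = y. Proof. exact: p1K. Qed.

Lemma swapf_x : p1' x = y. Proof. by rewrite /p1' /swapf eqxx. Qed.
Lemma swapf_y : p1' y = x. Proof. by rewrite /p1' /swapf eq_sym (negbTE xy) eqxx. Qed.
Lemma swapf_a : p1' a = b.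
Proof. by rewrite /p1' /swapf -/y -/a -/b (eq_sym a x) (negbTE xa) (negbTE ay) eqxx. Qed.
Lemma swapf_b : p1' b = a.
Proof.
rewrite /p1' /swapf -/y -/a -/b (negbTE bx) (eq_sym b y) (negbTE yb) (eq_sym b a).
by rewrite (negbTE ab) eqxx.
Qed.
Lemma swapf_o z : z \notin [:: x; y; a; b] -> p1' z = p1 z.
Proof.
rewrite !inE => /norP [zx /norP [zy /norP [za zb]]].
by rewrite /p1' /swapf -/y -/a -/b (negbTE zx) (negbTE zy) (negbTE za) (negbTE zb).
Qed.


Let Em := [seq (z, p1 z) | z <- [seq z <- enum T | z \notin [:: x; y; a; b]]].

Let Em_mem u v : ((u, v) \in Em) = (v == p1 u) && (u \notin [:: x; y; a; b]).
Proof.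
apply/mapP/andP => [[z]|[/eqP -> hu]].
  by rewrite mem_filter => /andP [hz _] [-> ->].
by exists u; rewrite // mem_filter hu mem_enum.
Qed.

Let Em_sub u v : (u, v) \in Em -> (u, v) \in Ep p1.
Proof. by rewrite Em_mem Ep_mem => /andP []. Qed.

Lemma E1 G1 G2 : cs (G1 ++ Ep p1 ++ G2) =2 cs ((x, a) :: (y, b) :: (G1 ++ Em ++ G2)).
Proof.
apply: cs_same => u v.
  rewrite !mem_cat => /orP [h|/orP [h|h]]; try by apply: cs_edge; rewrite !inE !mem_cat h ?orbT.
  move: h; rewrite Ep_mem => /eqP ->.
  case: (boolP (u \in [:: x; y; a; b])) => hu; last first.
    by apply: cs_edge; rewrite !inE !mem_cat Em_mem eqxx hu ?orbT.
  move: hu; rewrite !inE => /or4P [] /eqP ->.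
  - by apply: cs_edge; rewrite inE eqxx.
  - by apply: cs_edge; rewrite !inE eqxx orbT.
  - by rewrite p1a; apply: cs_edge'; rewrite inE eqxx.
  - by rewrite p1b; apply: cs_edge'; rewrite !inE eqxx orbT.
rewrite !inE !mem_cat => /orP [/eqP [-> ->]|/orP [/eqP [-> ->]|/orP [h|/orP [/Em_sub h|h]]]];
  apply: cs_edge; rewrite !mem_cat ?h ?orbT //; by rewrite Ep_mem eqxx orbT.
Qed.

Lemma E2 G1 G2 : cs (G1 ++ Ep p1' ++ G2) =2 cs ((x, y) :: (a, b) :: (G1 ++ Em ++ G2)).
Proof.
apply: cs_same => u v.
  rewrite !mem_cat => /orP [h|/orP [h|h]]; try by apply: cs_edge; rewrite !inE !mem_cat h ?orbT.
  move: h; rewrite Ep_mem => /eqP ->.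
  case: (boolP (u \in [:: x; y; a; b])) => hu; last first.
    by rewrite swapf_o //; apply: cs_edge; rewrite !inE !mem_cat Em_mem eqxx hu ?orbT.
  move: hu; rewrite !inE => /or4P [] /eqP ->.
  - by rewrite swapf_x; apply: cs_edge; rewrite inE eqxx.
  - by rewrite swapf_y; apply: cs_edge'; rewrite !inE eqxx.
  - by rewrite swapf_a; apply: cs_edge; rewrite !inE eqxx orbT.
  - by rewrite swapf_b; apply: cs_edge'; rewrite !inE eqxx orbT.
rewrite !inE !mem_cat => /orP [/eqP [-> ->]|/orP [/eqP [-> ->]|/orP [h|/orP [h|h]]]];
  apply: cs_edge; rewrite !mem_cat ?h ?orbT //.
- by rewrite Ep_mem swapf_x eqxx orbT.
- by rewrite Ep_mem swapf_a eqxx orbT.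
- move: h; rewrite Em_mem => /andP [/eqP -> hu].
  by rewrite Ep_mem swapf_o // eqxx orbT.
Qed.

Lemma inv_eq (p : T -> T) u v : involutive p -> (p u == v) = (u == p v).
Proof. by move=> pK; apply/eqP/eqP => [<-|->]; rewrite pK. Qed.

Lemma swap_ineq :
  ncomp (Ep p1 ++ F) + ncomp (Ep p0 ++ Ep p1) + 2 * ncomp (Ep p0 ++ Ep p1' ++ F)
  <= ncomp (Ep p1' ++ F) + ncomp (Ep p0 ++ Ep p1') + 2 * ncomp (Ep p0 ++ Ep p1 ++ F).
Proof.
have -> : ncomp (Ep p1 ++ F) = ncomp ((x, a) :: (y, b) :: (Em ++ F)).
  by apply: ncomp_eq; exact: (E1 [::] F).
have -> : ncomp (Ep p1' ++ F) = ncomp ((x, y) :: (a, b) :: (Em ++ F)).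
  by apply: ncomp_eq; exact: (E2 [::] F).
have -> : ncomp (Ep p0 ++ Ep p1) = ncomp ((x, a) :: (y, b) :: (Ep p0 ++ Em)).
  by apply: ncomp_eq => u v; have := E1 (Ep p0) [::] u v; rewrite !cats0.
have -> : ncomp (Ep p0 ++ Ep p1') = ncomp ((x, y) :: (a, b) :: (Ep p0 ++ Em)).
  by apply: ncomp_eq => u v; have := E2 (Ep p0) [::] u v; rewrite !cats0.
have -> : ncomp (Ep p0 ++ Ep p1 ++ F) = ncomp ((x, a) :: (y, b) :: (Ep p0 ++ Em ++ F)).
  by apply: ncomp_eq; exact: (E1 (Ep p0) F).
have -> : ncomp (Ep p0 ++ Ep p1' ++ F) = ncomp ((x, y) :: (a, b) :: (Ep p0 ++ Em ++ F)).
  by apply: ncomp_eq; exact: (E2 (Ep p0) F).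
set h := Ep p0 ++ Em; set hJ := Ep p0 ++ Em ++ F; set hc := Em ++ F.
have hhJ : forall u v, cs h u v -> cs hJ u v.
  by move=> u v; rewrite /hJ catA; apply: cs_catl.
have hcJ : forall u v, cs hc u v -> cs hJ u v.
  by move=> u v; apply: cs_catr.
have Emh : forall u v, (u, v) \in Em -> cs h u v.
  by move=> u v hm; apply: cs_catr; apply: cs_edge.
have Emc : forall u v, (u, v) \in Em -> cs hc u v.
  by move=> u v hm; apply: cs_catl; apply: cs_edge.
have hxy : cs h x y by apply: cs_catl; apply: cs_edge; rewrite Ep_mem.
have hxa : ~~ cs h x a.
  have hS : forall u v, (u, v) \in h -> (u \in [set x; y]) = (v \in [set x; y]).
    move=> u v; rewrite mem_cat Ep_mem Em_mem !inE.
    case/orP => [/eqP ->|/andP [/eqP -> hu]].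
      by rewrite !(inv_eq _ _ p0K) -/y p0y orbC.
    move: hu => /norP [ux /norP [uy /norP [ua ub]]].
    by rewrite !(inv_eq _ _ p1K) -/a -/b (negbTE ux) (negbTE uy) (negbTE ua) (negbTE ub).
  apply/negP => /(cs_closed hS); rewrite !inE eqxx /= (eq_sym a x) (negbTE xa) (negbTE ay).
  by [].
have hab : cs h a b.
  apply/negPn/negP => nab.
  have ev : ~~ odd #|cls h a|.
    apply: (@even_inv p0) => // z; rewrite !cls_mem => hz.
    by apply: cs_trans hz _; apply: cs_catl; apply: cs_edge; rewrite Ep_mem.
  suff : odd #|cls h a| by rewrite (negbTE ev).
  apply: (@odd_punct p1) => //; first exact: cls_self.
  move=> z; rewrite cls_mem => hz za.
  have zn : z \notin [:: x; y; a; b].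
    rewrite !inE (negbTE za) /=; apply/norP; split.
      by apply: contra hxa => /eqP zx; rewrite cs_sym -zx.
    apply/norP; split; last by apply: contra nab => /eqP <-.
    apply: contra hxa => /eqP zy; rewrite cs_sym; apply: cs_trans hz _.
    by rewrite zy cs_sym.
  split; first by rewrite cls_mem; apply: cs_trans hz _; apply: Emh; rewrite Em_mem eqxx zn.
  by rewrite (inv_eq _ _ p1K) -/a p1a; apply: contra zn => /eqP ->; rewrite !inE eqxx.
have r1 := ncomp_cons ((y, b) :: h) x a; have r2 := ncomp_cons h y b.
have r3 := ncomp_cons ((a, b) :: h) x y; have r4 := ncomp_cons h a b.
rewrite !cs_cons hxy hab (negbTE hxa) /= in r1 r3 r4.
have hyb : cs h y b = false.
  apply: contraNF hxa => yb'; apply: cs_trans hxy _; apply: cs_trans yb' _; by rewrite cs_sym.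
rewrite hyb /= in r2.
rewrite (cs_sym h b a) hab /= in r1.
have j1 := ncomp_cons ((y, b) :: hJ) x a; have j2 := ncomp_cons hJ y b.
have j3 := ncomp_cons ((a, b) :: hJ) x y; have j4 := ncomp_cons hJ a b.
have Jxy := hhJ _ _ hxy; have Jab := hhJ _ _ hab.
rewrite !cs_cons Jxy Jab /= in j1 j3 j4.
rewrite (cs_sym hJ b a) Jab /= orbT in j1.
have Jyb : cs hJ y b = cs hJ x a.
  apply/idP/idP => h1.
    by apply: cs_trans (hhJ _ _ hxy) _; apply: cs_trans h1 _; rewrite cs_sym.
  apply: cs_trans _ Jab; apply: cs_trans _ h1; by rewrite cs_sym.
rewrite Jyb in j2.
have c0 := L4 hc x a y b.
case: (boolP (cs hJ x a)) j1 j2 => Jxa j1 j2 /=.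
  rewrite /= in j1 j2; clear -j1 j2 j3 j4 r1 r2 r3 r4 c0; lia.
have nxa : ~~ cs hc x a by apply: contra Jxa; apply: hcJ.
have nxb : ~~ cs hc x b.
  apply: contra Jxa => /hcJ h1; apply: cs_trans h1 _; by rewrite cs_sym.
have nya : ~~ cs hc y a.
  apply: contra Jxa => /hcJ h1; apply: cs_trans Jxy h1.
have nyb : ~~ cs hc y b by rewrite -Jyb in Jxa; apply: contra Jxa; apply: hcJ.
have cxy : cs hc x y.
  apply/negPn/negP => nxy.
  have ev : ~~ odd #|cls hc x|.
    apply: (@even_cls F) => [z|z _]; last exact: Fev.
    rewrite cls_mem => hz; apply/subsetP => w; rewrite !cls_mem => hw.
    by apply: cs_trans hz _; apply: cs_catr.
  suff : odd #|cls hc x| by rewrite (negbTE ev).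
  apply: (@odd_punct p1) => //; first exact: cls_self.
  move=> z; rewrite cls_mem => hz zx.
  have zn : z \notin [:: x; y; a; b].
    rewrite !inE (negbTE zx) /=; apply/norP; split.
      by apply: contra nxy => /eqP <-.
    apply/norP; split; first by apply: contra nxa => /eqP <-.
    by apply: contra nxb => /eqP <-.
  split; first by rewrite cls_mem; apply: cs_trans hz _; apply: Emc; rewrite Em_mem eqxx zn.
  rewrite (inv_eq _ _ p1K) -/a; apply/negP => /eqP za; move: zn; by rewrite za !inE eqxx !orbT.
have k1 := ncomp_cons ((y, b) :: hc) x a; have k2 := ncomp_cons hc y b.
have k3 := ncomp_cons ((a, b) :: hc) x y; have k4 := ncomp_cons hc a b.
rewrite !cs_cons ?cxy ?(negbTE nxa) ?(negbTE nxb) ?(negbTE nyb) /= in k1 k3.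
rewrite (negbTE nyb) /= in k2.
rewrite (cs_sym hc b a) in k1.
rewrite /= in j1 j2.
case: (cs hc a b) k1 k4 => /= k1 k4; clear -j1 j2 j3 j4 k1 k2 k3 k4 r1 r2 r3 r4; lia.
Qed.

Lemma swapf_inv : involutive p1'.
Proof.
move=> z.
case: (boolP (z \in [:: x; y; a; b])) => hz; last first.
  rewrite (swapf_o hz) swapf_o //.
  move: hz; rewrite !inE !(inv_eq _ _ p1K) -/a -/b p1a p1b.
  by move=> /norP [h1 /norP [h2 /norP [h3 h4]]]; rewrite (negbTE h1) (negbTE h2) (negbTE h3) (negbTE h4).
move: hz; rewrite !inE => /or4P [] /eqP ->.
- by rewrite swapf_x swapf_y.
- by rewrite swapf_y swapf_x.
- by rewrite swapf_a swapf_b.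
- by rewrite swapf_b swapf_a.
Qed.

Lemma swapf_fp z : p1' z != z.
Proof.
case: (boolP (z \in [:: x; y; a; b])) => hz; last by rewrite (swapf_o hz).
move: hz; rewrite !inE => /or4P [] /eqP ->.
- by rewrite swapf_x eq_sym.
- by rewrite swapf_y.
- by rewrite swapf_a eq_sym.
- by rewrite swapf_b.
Qed.

Lemma swapf_dec : #|[set z | p1' z != p0 z]| < #|[set z | p1 z != p0 z]|.
Proof.
apply: proper_card; apply/properP; split; last first.
  by exists x; rewrite !inE // swapf_x eqxx.
apply/subsetP => z; rewrite !inE.
case: (boolP (z \in [:: x; y; a; b])) => hz; last by rewrite (swapf_o hz).
move: hz; rewrite !inE => /or4P [] /eqP ->.
- by rewrite swapf_x eqxx.
- by rewrite swapf_y p0y eqxx.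
- move=> _; rewrite p1a eq_sym (inv_eq _ _ p0K) -/y. exact: ay.
- move=> _; rewrite p1b eq_sym (inv_eq _ _ p0K) -/y p0y. exact: bx.
Qed.

End Swap.

Definition Gq (p0 p1 : T -> T) F :=
  ncomp (Ep p0 ++ F) + ncomp (Ep p1 ++ F) + ncomp (Ep p0 ++ Ep p1) + ncomp F
  <= #|T| + 2 * ncomp (Ep p0 ++ Ep p1 ++ F) + iso F.

Lemma cs_eqmem s s' : s =i s' -> cs s =2 cs s'.
Proof.
by move=> H; apply: cs_same => u v h; apply: cs_edge; rewrite ?H // -H.
Qed.

Lemma Ep_cls p z : z \in cls (Ep p) z /\ p z \in cls (Ep p) z.
Proof. by rewrite !cls_mem cs_refl; split=> //; apply: cs_edge; rewrite Ep_mem. Qed.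

Lemma two_le_even m : 0 < m -> ~~ odd m -> 1 < m.
Proof. by case: m => [|[|m]]. Qed.

Lemma ncomp_Ep p : (forall z, p z != z) -> 2 * ncomp (Ep p) <= #|T|.
Proof.
move=> pf; apply: ncomp_le => z; have [h1 h2] := Ep_cls p z.
apply: leq_trans (_ : 2 <= #|[set z; p z]|) _; first by rewrite cards2 eq_sym pf.
apply: subset_leq_card; apply/subsetP => w; rewrite in_set2 => /orP [] /eqP ->.
  exact: h1.
exact: h2.
Qed.

Lemma even_phase p0 F : involutive p0 -> (forall z, p0 z != z) ->
  (forall z, ~~ odd #|cls F z|) ->
  forall p1, involutive p1 -> (forall z, p1 z != z) -> Gq p0 p1 F.
Proof.
move=> p0K p0f Fev p1.
move: {2}#|[set z | p1 z != p0 z]| (leqnn #|[set z | p1 z != p0 z]|) => n.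
elim: n p1 => [|n IH] p1 hn p1K p1f.
  have e : Ep p1 = Ep p0.
    apply: eq_map => z; congr pair; apply/eqP; apply/negPn/negP => hz.
    move: hn; rewrite leqn0 => /eqP/cards0_eq Se.
    by move: (in_set0 z); rewrite -Se inE hz.
  rewrite /Gq e.
  have -> : ncomp (Ep p0 ++ Ep p0 ++ F) = ncomp (Ep p0 ++ F).
    by apply: ncomp_eq; apply: cs_eqmem => w; rewrite !mem_cat orbA orbb.
  have h1 := ncomp_Ep p0f.
  have h2 : 2 * ncomp F <= #|T|.
    apply: ncomp_le => z; apply: two_le_even => //.
    by apply/card_gt0P; exists z; exact: cls_self.
  have h3 : ncomp (Ep p0 ++ Ep p0) = ncomp (Ep p0).
    by apply: ncomp_eq; apply: cs_eqmem => w; rewrite !mem_cat orbb.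
  rewrite h3; clear -h1 h2; lia.
case: (pickP (fun z => p1 z != p0 z)) => [x hx|hno]; last first.
  apply: IH => //; rewrite (_ : [set z | p1 z != p0 z] = set0) ?cards0 //.
  by apply/setP => z; rewrite !inE hno.
have := swap_ineq p0K p1K p0f p1f Fev hx.
have := IH (swapf p0 p1 x).
have hd := swapf_dec p0K p1K p0f hx.
move=> /(_ _ (swapf_inv p1K p0f p1f hx) (swapf_fp p1K p0f p1f hx)).
rewrite /Gq; move=> H1 H2.
have := H1 (leq_trans (leq_trans hd hn) (leqnn _)).
clear -H2; lia.
Qed.

Lemma cs_single F c z : cls F c = [set c] -> cs F z c = (z == c).
Proof. by move=> h; rewrite cs_sym -cls_mem h inE. Qed.

Lemma cls_merge F c d z : c != d -> cls F c = [set c] -> cls F d = [set d] ->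
  cls ((c, d) :: F) z = if (z == c) || (z == d) then [set c; d] else cls F z.
Proof.
move=> st hs ht.
have nst : ~~ cs F c d by rewrite cs_sym (@cs_single F c d hs) eq_sym.
rewrite cls_cons // (@cs_single F c z hs) (@cs_single F d z ht) hs ht.
by case: ifP => //.
Qed.

Lemma iso_merge F c d : c != d -> cls F c = [set c] -> cls F d = [set d] ->
  iso ((c, d) :: F) + 2 = iso F.
Proof.
move=> st hs ht; rewrite /iso.
have -> : [set x | cls F x == [set x]] = c |: (d |: [set x | cls ((c, d) :: F) x == [set x]]).
  apply/setP => z; rewrite !inE (cls_merge _ st hs ht).
  case: (boolP (z == c)) => [/eqP ->|zs]; first by rewrite hs eqxx.
  case: (boolP (z == d)) => [/eqP ->|zt] //=; first by rewrite ht eqxx.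
have nin : forall w, (w == c) || (w == d) -> w \notin [set x | cls ((c, d) :: F) x == [set x]].
  move=> w hw; rewrite inE (cls_merge _ st hs ht) hw; apply/negP => /eqP h.
  by move: (cards2 c d); rewrite h cards1 st.
have nc' : c \notin [set x | cls ((c, d) :: F) x == [set x]] by apply: nin; rewrite eqxx.
have nd' : d \notin [set x | cls ((c, d) :: F) x == [set x]] by apply: nin; rewrite eqxx orbT.
rewrite cardsU1 in_setU1 negb_or st nc' cardsU1 nd' /=.
by rewrite addnC add1n addSn.
Qed.



Lemma cs_mid G H e : cs (G ++ e :: H) =2 cs (e :: G ++ H).
Proof. by apply: cs_eqmem => w; rewrite !(mem_cat, inE) orbCA. Qed.

Lemma sing_phase p0 p1 : involutive p0 -> involutive p1 ->
  (forall z, p0 z != z) -> (forall z, p1 z != z) ->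
  forall F, (forall z, ~~ odd #|cls F z| || (cls F z == [set z])) -> Gq p0 p1 F.
Proof.
move=> p0K p1K p0f p1f F.
move: {2}(iso F) (leqnn (iso F)) => n; elim: n F => [|n IH] F hn hF;
  (case: (pickP (fun z => cls F z == [set z])) => [c hc | hno];
   last by apply: even_phase => // z; move: (hF z); rewrite hno orbF).
  by move: hn; rewrite leqn0 /iso => /eqP/cards0_eq/setP/(_ c); rewrite !inE hc.
have hcs : cls F c = [set c] by apply/eqP.
pose K := [set z | cs (Ep p0 ++ F) c z].
pose Sg := [set z | cs (Ep p0 ++ F) c z && (cls F z == [set z])].
have cSg : c \in Sg by rewrite inE cs_refl hc.
have evK : ~~ odd #|K|.
  apply: (@even_inv p0) => // z; rewrite !inE => hz.
  by apply: cs_trans hz _; apply: cs_catl; apply: cs_edge; rewrite Ep_mem.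
have evKS : ~~ odd #|K :\: Sg|.
  apply: (@even_cls F) => z; rewrite !inE => /andP [zn zK].
    apply/subsetP => w; rewrite !cls_mem => hw.
    have wK : cs (Ep p0 ++ F) c w by apply: cs_trans zK (cs_catr _ hw).
    rewrite !inE wK /= andbT; move: zn; rewrite zK /=; apply: contra => /eqP hw'.
    have : cls F z = [set w] by rewrite -hw'; apply: cls_eq.
    move=> hz; have zw : z == w by rewrite -in_set1 -hz cls_self.
    by rewrite hz (eqP zw).
  by have := hF z; move: zn; rewrite zK /= => zn; rewrite (negbTE zn) orbF.
have evS : ~~ odd #|Sg|.
  have := cardsID Sg K; rewrite (setIidPr _); last by apply/subsetP => z; rewrite !inE => /andP [].
  by move=> h; move: evK; rewrite -h oddD (negbTE evKS) addbF.
have : 0 < #|Sg :\ c|.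
  move: evS; rewrite (cardsD1 c) cSg oddD /=.
  by case: #|Sg :\ c|.
move=> /card_gt0P [d]; rewrite !inE => /andP [dc /andP [dK hd]].
have hds : cls F d = [set d] by apply/eqP.
have cd : c != d by rewrite eq_sym.
have Hi := iso_merge cd hcs hds.
have hF' : forall z, ~~ odd #|cls ((c, d) :: F) z| || (cls ((c, d) :: F) z == [set z]).
  move=> z; rewrite (cls_merge _ cd hcs hds); case: ifP => _; last exact: hF.
  by rewrite cards2 cd.
have := IH ((c, d) :: F); rewrite /Gq => /(_ _ hF').
have hn' : iso ((c, d) :: F) <= n by move: hn; rewrite -Hi addn2 ltnS => /ltnW.
move=> /(_ hn').
have E0 : cs (Ep p0 ++ F) c d by move: dK; rewrite ?inE.
have EJ : cs (Ep p0 ++ Ep p1 ++ F) c d.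
  by move: E0; apply: cs_subl => e; rewrite !mem_cat => /orP [] ->; rewrite ?orbT.
have EF : cs F c d = false by rewrite cs_sym (@cs_single F c d hcs) eq_sym (negbTE cd).
rewrite (ncomp_eq (cs_mid (Ep p0) F (c, d))) (ncomp_eq (cs_mid (Ep p1) F (c, d))).
have -> : ncomp (Ep p0 ++ Ep p1 ++ (c, d) :: F) = ncomp ((c, d) :: Ep p0 ++ Ep p1 ++ F).
  by apply: ncomp_eq; apply: cs_eqmem => w; rewrite !(mem_cat, inE); case: (w == (c, d)); rewrite /= ?orbT ?orbF.
have a0 := ncomp_cons (Ep p0 ++ F) c d; have a1 := ncomp_cons (Ep p1 ++ F) c d.
have aJ := ncomp_cons (Ep p0 ++ Ep p1 ++ F) c d; have av := ncomp_cons F c d.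
rewrite E0 in a0; rewrite EJ in aJ; rewrite EF in av.
move: a0 a1 aJ av Hi; rewrite /=; clear; lia.
Qed.


Lemma cs_catE G s1 s2 : cs s1 =2 cs s2 -> cs (G ++ s1) =2 cs (G ++ s2).
Proof.
move=> H; apply: cs_same => u v; rewrite mem_cat => /orP [h|h].
- by apply: cs_catl; apply: cs_edge.
- by apply: cs_catr; rewrite -H; apply: cs_edge.
- by apply: cs_catl; apply: cs_edge.
- by apply: cs_catr; rewrite H; apply: cs_edge.
Qed.

Section Split.
Variables (F : seq (T * T)) (d c : T).
Hypotheses (cd : c != d) (hc : cs F d c).

Definition Fsplit := [seq e <- enum {: T * T} | cs F e.1 e.2 && (e.1 != d) && (e.2 != d)].

Lemma cs_split u w : cs Fsplit u w = (u == w) || (cs F u w && (u != d) && (w != d)).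
Proof.
apply/idP/idP; last first.
  case/orP => [/eqP -> | h]; first exact: cs_refl.
  by apply: cs_edge; rewrite mem_filter h mem_enum.
move: u w; apply: cs_min.
- by move=> u; rewrite eqxx.
- move=> v u w /orP [/eqP -> //|/andP [/andP [h1 h2] h3]] /orP [/eqP <-|/andP [/andP [h1' h2'] h3']].
    by rewrite h1 h2 h3 orbT.
  by rewrite (cs_trans h1 h1') h2 h3' orbT.
- move=> u w; rewrite mem_filter /= => /andP [/andP [/andP [h1 h2] h3] _].
  by rewrite h1 h2 h3 cs_sym h1 !orbT.
Qed.

Lemma cs_splitE : cs ((d, c) :: Fsplit) =2 cs F.
Proof.
apply: cs_same => u w.
  rewrite inE => /orP [/eqP [-> ->] //|h].
  by have := cs_edge h; rewrite cs_split => /orP [/eqP ->|/andP [/andP [] //]]; rewrite cs_refl.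
move=> h; have huw := cs_edge h.
have dc : cs ((d, c) :: Fsplit) d c by apply: cs_edge; rewrite inE eqxx.
have sub : forall a b, cs Fsplit a b -> cs ((d, c) :: Fsplit) a b.
  by apply: cs_subl => e; rewrite inE => ->; rewrite orbT.
have cw : forall w, w != d -> cs F d w -> cs ((d, c) :: Fsplit) d w.
  move=> w' wd hw; apply: cs_trans dc (sub _ _ _); rewrite cs_split cd wd andbT.
  by rewrite (cs_trans _ hw) ?orbT // cs_sym.
case: (boolP (u == d)) => [/eqP ud|ud]; case: (boolP (w == d)) => [/eqP wd|wd].
- by rewrite ud wd cs_refl.
- by rewrite ud; apply: cw; rewrite // -ud.
- by rewrite wd cs_sym; apply: cw; rewrite // -wd cs_sym.
- by apply: sub; rewrite cs_split huw ud wd orbT.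
Qed.

Lemma cls_split z : z != d -> cls Fsplit z = cls F z :\ d.
Proof.
move=> zd; apply/setP => w; rewrite !inE cs_split zd andbT /=.
case: (boolP (z == w)) => [/eqP <-|_] /=; first by rewrite zd cs_refl.
by rewrite andbC.
Qed.

Lemma cls_split_d : cls Fsplit d = [set d].
Proof. by apply/setP => w; rewrite !inE cs_split eqxx /= andbF orbF eq_sym. Qed.

End Split.


Definition mF F := #|[set z | (2 < #|cls F z|) && odd #|cls F z|]|.

Lemma gen_phase p0 p1 : involutive p0 -> involutive p1 ->
  (forall z, p0 z != z) -> (forall z, p1 z != z) -> forall F, Gq p0 p1 F.
Proof.
move=> p0K p1K p0f p1f F.
move: {2}(mF F) (leqnn (mF F)) => n; elim: n F => [|n IH] F hn;
  (case: (pickP (fun z => (2 < #|cls F z|) && odd #|cls F z|)) => [d hd|hno];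
   last first).
- apply: sing_phase => // z; move: (hno z) => /=.
  case: (boolP (odd #|cls F z|)) => hod; rewrite ?andbT ?andbF /=; last by [].
  move/negbT; rewrite -leqNgt => h2.
  have : #|cls F z| == 1.
    move: hod h2; case: #|cls F z| => [|[|[|m]]] //.
  move=> /cards1P [w hw]; move: (cls_self F z); rewrite hw inE => /eqP zw.
  by rewrite zw.
- by move: hn; rewrite leqn0 /mF => /eqP/cards0_eq/setP/(_ d); rewrite !inE hd.
- apply: sing_phase => // z; move: (hno z) => /=.
  case: (boolP (odd #|cls F z|)) => hod; rewrite ?andbT ?andbF /=; last by [].
  move/negbT; rewrite -leqNgt => h2.
  have : #|cls F z| == 1.
    move: hod h2; case: #|cls F z| => [|[|[|m]]] //.
  move=> /cards1P [w hw]; move: (cls_self F z); rewrite hw inE => /eqP zw.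
  by rewrite zw.
move: hd => /andP [hd3 hdo].
have : 0 < #|cls F d :\ d|.
  by move: hd3; rewrite (cardsD1 d) cls_self add1n ltnS => /ltnW.
move=> /card_gt0P [c]; rewrite in_setD1 cls_mem => /andP [cd hc].
set F' := Fsplit F d.
have Hcs := cs_splitE cd hc.
have dnot : ~~ cs F' d c by rewrite cs_split eq_sym (negbTE cd) eqxx andbF.
have clsz : forall z, z != d -> cs F z d -> cls F z = cls F d.
  by move=> z _ h; apply: cls_eq.
have nin : forall z, z != d -> ~~ cs F z d -> cls F' z = cls F z.
  move=> z zd h; rewrite cls_split //; apply/setP => w; rewrite !inE.
  by case: (boolP (w == d)) => [/eqP ->|] //=; rewrite (negbTE h).
have szd : #|cls F d :\ d| = #|cls F d| - 1 by rewrite (cardsD1 d (cls F d)) cls_self add1n subn1.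
have hm : mF F' < mF F.
  apply: proper_card; apply/properP; split; last first.
    by exists d; rewrite !inE ?hd3 ?hdo // cls_split_d cards1.
  apply/subsetP => z; rewrite !inE.
  case: (boolP (z == d)) => [/eqP ->|zd]; first by rewrite cls_split_d cards1.
  case: (boolP (cs F z d)) => h; last by rewrite nin.
  rewrite cls_split // (clsz _ zd h) szd => /andP [_].
  move=> h'; exfalso; move: h' hdo hd3; case: #|cls F d| => [|m] //=.
  by rewrite subn1 /= => ->.
have IH' := IH F' (leq_trans (leq_trans hm hn) (leqnn _)).
have hiso : iso F' = iso F + 1.
  rewrite /iso addn1.
  have -> : [set x | cls F' x == [set x]] = d |: [set x | cls F x == [set x]].
    apply/setP => z; rewrite !inE.
    case: (boolP (z == d)) => [/eqP ->|zd] /=; first by rewrite cls_split_d eqxx.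
    case: (boolP (cs F z d)) => h; last by rewrite nin.
    rewrite cls_split // (clsz _ zd h).
    have ne : forall A : {set T}, 1 < #|A| -> A == [set z] = false.
      by move=> A hA; apply/negbTE/negP => /eqP hz; move: hA; rewrite hz cards1.
    rewrite !ne //; first by apply: ltn_trans hd3.
    by rewrite szd; move: hd3; case: #|cls F d| => [|[|[|m]]].
  rewrite cardsU1 inE; case: eqP => // hdd; move: hd3; by rewrite hdd cards1.
have eG : forall G, ncomp (G ++ F) = ncomp ((d, c) :: (G ++ F')).
  move=> G; apply: ncomp_eq => u w.
  rewrite (cs_catE G (fun a b => esym (Hcs a b))) //.
  by rewrite cs_mid.
have eF : ncomp F = ncomp ((d, c) :: F') by apply: ncomp_eq => u w; rewrite Hcs.
have a0 := ncomp_cons (Ep p0 ++ F') d c.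
have a1 := ncomp_cons (Ep p1 ++ F') d c.
have aJ := ncomp_cons ((Ep p0 ++ Ep p1) ++ F') d c.
have av := ncomp_cons F' d c; rewrite dnot in av.
move: IH'; rewrite /Gq [Ep p0 ++ Ep p1 ++ F]catA [Ep p0 ++ Ep p1 ++ F']catA.
rewrite eG (eG (Ep p1)) (eG (Ep p0 ++ Ep p1)) eF hiso.
have s0 : cs (Ep p0 ++ F') d c -> cs ((Ep p0 ++ Ep p1) ++ F') d c.
  by apply: cs_subl => e; rewrite !mem_cat => /orP [] ->; rewrite ?orbT.
have s1 : cs (Ep p1 ++ F') d c -> cs ((Ep p0 ++ Ep p1) ++ F') d c.
  by apply: cs_subl => e; rewrite !mem_cat => /orP [] ->; rewrite ?orbT.
move: a0 a1 aJ av s0 s1.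
case: (cs ((Ep p0 ++ Ep p1) ++ F') d c);
  case: (cs (Ep p0 ++ F') d c); case: (cs (Ep p1 ++ F') d c) => //=; clear; lia.
Qed.


Lemma cs_catE' G s1 s2 : cs s1 =2 cs s2 -> cs (s1 ++ G) =2 cs (s2 ++ G).
Proof.
move=> H; apply: cs_same => u v; rewrite mem_cat => /orP [h|h].
- by apply: cs_catl; rewrite -H; apply: cs_edge.
- by apply: cs_catr; apply: cs_edge.
- by apply: cs_catl; rewrite H; apply: cs_edge.
- by apply: cs_catr; apply: cs_edge.
Qed.

Lemma submod e g h : ncomp (e ++ h) + ncomp (g ++ h) <= ncomp h + ncomp (e ++ g ++ h).
Proof.
elim: e => [|[u v] e IH] /=; first by rewrite addnC.
have a1 := ncomp_cons (e ++ h) u v; have a2 := ncomp_cons (e ++ g ++ h) u v.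
have sub : cs (e ++ h) u v -> cs (e ++ g ++ h) u v.
  by apply: cs_subl => w; rewrite !mem_cat => /orP [] ->; rewrite ?orbT.
move: a1 a2 sub IH; case: (cs (e ++ g ++ h) u v); case: (cs (e ++ h) u v) => //=; lia.
Qed.

Definition pe (P : {set {set T}}) : seq (T * T) :=
  [seq e <- enum {: T * T} | e.2 \in pblock P e.1].

Lemma pe_mem P u v : ((u, v) \in pe P) = (v \in pblock P u).
Proof. by rewrite mem_filter mem_enum andbT. Qed.

Lemma cs_pe P : is_part P -> cs (pe P) =2 (fun x y => y \in pblock P x).
Proof.
move=> hP x y; have eqv := pblock_equivalence hP.
have tP := partition_trivIset hP; have cP := cover_partition hP.
apply/idP/idP; last by move=> h; apply: cs_edge; rewrite pe_mem.
move: x y; apply: cs_min.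
- by move=> x; rewrite mem_pblock cP inE.
- move=> y x z hx hz; rewrite -(same_pblock tP hx) //.
- move=> u v; rewrite pe_mem => h; split=> //.
  by rewrite (same_pblock tP h) mem_pblock cP inE.
Qed.

Lemma ncomp_pe P : is_part P -> ncomp (pe P) = #|P|.
Proof.
move=> hP; rewrite /ncomp -cpartE.
have E : equivalence_partition (cs (pe P)) [set: T] =
         equivalence_partition (fun x y => y \in pblock P x) [set: T].
  have -> : equivalence_partition (cs (pe P)) [set: T] =
    [set [set y in [set: T] | cs (pe P) x y] | x in [set: T]] by [].
  have -> : equivalence_partition (fun x y => y \in pblock P x) [set: T] =
    [set [set y in [set: T] | y \in pblock P x] | x in [set: T]] by [].
  by apply: eq_imset => x; apply/setP => y; rewrite !inE (cs_pe hP).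
by rewrite E (equivalence_partition_pblock hP).
Qed.

Lemma cls_pe P x : is_part P -> cls (pe P) x = pblock P x.
Proof. by move=> hP; apply/setP => y; rewrite !inE (cs_pe hP). Qed.

Lemma join_cs A B J : is_part A -> is_part B -> is_join A B J ->
  cs (pe J) =2 cs (pe A ++ pe B).
Proof.
move=> hA hB [hJ rAJ rBJ minJ].
have tJ := partition_trivIset hJ; have cJ := cover_partition hJ.
set s := pe A ++ pe B.
have sub1 : forall P, is_part P -> refines P J -> forall u v, (u, v) \in pe P -> cs (pe J) u v.
  move=> P hP rPJ u v; rewrite pe_mem => h; rewrite (cs_pe hJ).
  have uP : u \in cover P by rewrite (cover_partition hP) inE.
  have [C CJ sub] := rPJ _ (pblock_mem uP).
  have uC : u \in C by move/subsetP: sub; apply; rewrite mem_pblock.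
  rewrite (def_pblock tJ CJ uC); by move/subsetP: sub; apply.
move=> x y; apply/idP/idP; last first.
  apply: cs_sub => u v; rewrite mem_cat => /orP [].
    exact: sub1 hA rAJ u v.
  exact: sub1 hB rBJ u v.
pose R := cpart s.
have hR : is_part R by rewrite /R -cpartE; apply: equivalence_partitionP; apply: cls_equiv.
have refR : forall P, is_part P -> (forall u v, (u, v) \in pe P -> (u, v) \in s) -> refines P R.
  move=> P hP sPs Bl BP; have := partition_neq0 hP BP; case/set0Pn => z zB.
  exists (cls s z); first exact: cls_in.
  apply/subsetP => w wB; rewrite cls_mem; apply: cs_edge; apply: sPs.
  by rewrite pe_mem (def_pblock (partition_trivIset hP) BP zB).
have rJR : refines J R.
  apply: minJ => //; apply: refR => // u v h; rewrite mem_cat h ?orbT //.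
rewrite (cs_pe hJ) => hy.
have xJ : x \in cover J by rewrite cJ inE.
have [C /cpartP [z ->] sub] := rJR _ (pblock_mem xJ).
have hx : x \in cls s z by move/subsetP: sub; apply; rewrite mem_pblock.
have hy' : y \in cls s z by move/subsetP: sub; apply.
rewrite cls_mem in hx; rewrite cls_mem in hy'; apply: cs_trans _ hy'; by rewrite cs_sym.
Qed.


Lemma pm_inv P : perfect_matching P ->
  exists p : T -> T, [/\ involutive p, (forall z, p z != z) & cs (Ep p) =2 cs (pe P)].
Proof.
case=> hP h2; have tP := partition_trivIset hP; have cP := cover_partition hP.
have inC : forall x, x \in cover P by move=> x; rewrite cP inE.
have hb : forall x, #|pblock P x| = 2 by move=> x; apply: h2; apply: pblock_mem.
have xin : forall x, x \in pblock P x by move=> x; rewrite mem_pblock.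
pose p x := odflt x [pick y in pblock P x :\ x].
have pP : forall x, p x \in pblock P x /\ p x != x.
  move=> x; rewrite /p; case: pickP => [y|none] /=.
    by rewrite !inE => /andP [-> ->].
  exfalso; have : 0 < #|pblock P x :\ x|.
    by move: (hb x); rewrite (cardsD1 x) xin add1n => [[->]].
  by case/card_gt0P => w hw; move: (none w); rewrite hw.
have blk : forall x, pblock P x = [set x; p x].
  move=> x; have [h1 h3] := pP x; apply/esym/eqP; rewrite eqEcard hb cards2 eq_sym h3 andbT.
  by apply/subsetP => w; rewrite !inE => /orP [] /eqP ->.
have pK : involutive p.
  move=> x; have [h1 h3] := pP x; have [h4 h5] := pP (p x).
  move: h4; rewrite (same_pblock tP h1) blk !inE => /orP [/eqP // |].
  by rewrite (negbTE h5).
exists p; split=> //; first by move=> z; have [] := pP z.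
apply: cs_same => u v.
  by rewrite Ep_mem => /eqP ->; apply: cs_edge; rewrite pe_mem; have [] := pP u.
rewrite pe_mem blk !inE => /orP [/eqP ->|/eqP ->]; first exact: cs_refl.
by apply: cs_edge; rewrite Ep_mem.
Qed.

End Graphs.

Unset Implicit Arguments.
Set Strict Implicit.

Theorem proposition3p1 (k : nat) (hk : 0 < k)
  (P0 P1 P J01 J0 J1 J : {set {set 'I_(2 * k)}}) :
  is_part2 P0 -> is_part2 P1 -> is_part2 P ->
  perfect_matching P0 -> perfect_matching P1 ->
  is_join P0 P1 J01 -> is_join P0 P J0 -> is_join P1 P J1 ->
  is_join J01 P J -> #|J| = 1 ->
  (#|J0| + #|J1| <= 1 + #|P| /\ 1 + #|P| <= k + 1) /\
  (1 < #|J01| -> #|J0| + #|J1| <= k + 1 - #|J01| %/ 2).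
Proof.
move=> [hP0 _] [hP1 _] [hP hP2] m0 m1 j01 j0 j1 jj hJ.
have pJ01 : is_part J01 by case: j01.
have [p0 [p0K p0f E0]] := pm_inv m0.
have [p1 [p1K p1f E1]] := pm_inv m1.
set F := pe P.
have c0 : #|J0| = ncomp (Ep p0 ++ F).
  rewrite -(ncomp_pe (let: And4 h _ _ _ := j0 in h)); apply: ncomp_eq => u v.
  by rewrite (join_cs hP0 hP j0) (cs_catE' _ (fun a b => esym (E0 a b))).
have c1 : #|J1| = ncomp (Ep p1 ++ F).
  rewrite -(ncomp_pe (let: And4 h _ _ _ := j1 in h)); apply: ncomp_eq => u v.
  by rewrite (join_cs hP1 hP j1) (cs_catE' _ (fun a b => esym (E1 a b))).
have E01 : cs (pe J01) =2 cs (Ep p0 ++ Ep p1).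
  move=> u v; rewrite (join_cs hP0 hP1 j01) (cs_catE' _ (fun a b => esym (E0 a b))).
  by rewrite (cs_catE _ (fun a b => esym (E1 a b))).
have r : #|J01| = ncomp (Ep p0 ++ Ep p1).
  by rewrite -(ncomp_pe pJ01); apply: ncomp_eq.
have cj : #|J| = ncomp (Ep p0 ++ Ep p1 ++ F).
  rewrite -(ncomp_pe (let: And4 h _ _ _ := jj in h)); apply: ncomp_eq => u v.
  by rewrite (join_cs pJ01 hP jj) (cs_catE' _ E01) catA.
have v : #|P| = ncomp F by rewrite ncomp_pe.
have i0 : iso F = 0.
  apply/eqP; rewrite cards_eq0; apply/eqP/setP => x; rewrite !inE cls_pe //.
  apply/negbTE/negP => /eqP hx.
  have xP : x \in cover P by rewrite (cover_partition hP) inE.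
  by move: (hP2 _ (pblock_mem xP)); rewrite hx cards1.
have G := gen_phase p0K p1K p0f p1f F; rewrite /Gq i0 in G.
have S := submod (Ep p0) (Ep p1) F.
have V : 2 * ncomp F <= #|'I_(2 * k)|.
  apply: ncomp_le => x; rewrite cls_pe //; apply: hP2; apply: pblock_mem.
  by rewrite (cover_partition hP) inE.
rewrite card_ord in V G.
rewrite c0 c1 r v; rewrite cj in hJ; rewrite hJ in G S.
split; first by split; lia.
move=> hr; clear -G S V hr; lia.
Qed.
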